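(* Let $G$ be a graph with no induced $P_7$, $C_4$, $C_6$ or $C_7$, let $H=(B_1,\dots,B_5)$ be a maximal nice blowup of $C_5$ in $G$, and for each $j$ let $q_j$ be a fixed vertex of $B_j$ complete to $B_{j-1}\cup B_{j+1}$. Let $i\in\{1,\dots,5\}$, let $x\in A_3(i)$, and suppose $B_i\setminus N(x)$ is anticomplete to $N_{B_{i+1}}(x)$. Then: (1) $q_i\in N_{B_i}(x)$ and $q_{i+1}\in B_{i+1}\setminus N(x)$; (2) $N_{B_i}(x)$ is complete to $N_{B_j}(x)$ for $j\in\{i-1,i+1\}$; (3) for any $a\in B_i\setminus N(x)$ and $b\in N_{B_i}(x)$, $N_{B_{i-1}\cup B_{i+1}}(a)\subsetneq N_{B_{i-1}\cup B_{i+1}}(b)$; (4) for any $a\in B_{i-1}\setminus N(x)$ and $b\in N_{B_{i-1}}(x)$, $N_{B_{i-2}\cup B_i}(a)\subseteq N_{B_{i-2}\cup B_i}(b)$; consequently there is a vertex in $N_{B_{i-1}}(x)$ complete to $B_{i-2}\cup B_i$.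
   Context: Indices modulo $5$. A nice blowup of $C_5$ is a tuple $(B_1,\dots,B_5)$ of pairwise disjoint cliques such that every vertex of $B_j$ has a neighbor in $B_{j-1}$ and in $B_{j+1}$, $B_j$ is anticomplete to $B_{j+2}$, and there are no $a\in B_j$, distinct $b,c\in B_{j+1}$, $d\in B_{j+2}$ with $G[\{a,b,c,d\}]\cong P_4$; $V(H)=\bigcup B_j$; maximal means no nice blowup has vertex set strictly containing $V(H)$. (Such vertices $q_j$ exist.) For $v\notin V(H)$, $\operatorname{supp}(v)$ is the set of $j$ such that $v$ has a neighbor in $B_j$; $A_3(i)=\{v\notin V(H):\operatorname{supp}(v)=\{i-1,i,i+1\}\}$. $N(x)$ is the neighborhood of $x$ and $N_S(x)=N(x)\cap S$. *)

(* Defs.v *)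
(* finite simple graphs as symmetric irreflexive relations. *)
From mathcomp Require Import all_boot.
Set Implicit Arguments. Unset Strict Implicit. Unset Printing Implicit Defensive.

Section Graphs.
Variable T : finType.
Variable e : rel T.

Definition nbhd (x : T) : {set T} := [set y | e x y].
Definition nbhd_in (S : {set T}) (x : T) : {set T} := S :&: nbhd x.

Definition is_clique (S : {set T}) : Prop :=
  forall x y, x \in S -> y \in S -> x != y -> e x y.
Definition complete (A B : {set T}) : Prop :=
  forall a b, a \in A -> b \in B -> e a b.
Definition anticomplete (A B : {set T}) : Prop :=
  forall a b, a \in A -> b \in B -> ~~ e a b.

Definition induced_iso (S : {set T}) (n : nat) (h : rel 'I_n) : Prop :=
  exists f : 'I_n -> T, [/\ injective f, [set f i | i : 'I_n] = S &
     forall i j, e (f i) (f j) = h i j].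

Definition has_induced (n : nat) (h : rel 'I_n) : Prop :=
  exists f : 'I_n -> T, injective f /\ forall i j, e (f i) (f j) = h i j.
End Graphs.

Definition path_rel (n : nat) : rel 'I_n :=
  fun i j => (i.+1 == j :> nat) || (j.+1 == i :> nat).
Definition cycle_rel (n : nat) : rel 'I_n :=
  fun i j => (i != j) && ((ordS i == j) || (ordS j == i)).

Arguments path_rel : clear implicits.
Arguments cycle_rel : clear implicits.

Definition isucc (j : 'I_5) : 'I_5 := ordS j.
Definition ipred (j : 'I_5) : 'I_5 := ord_pred j.

Section Blowup.
Variable T : finType.
Variable e : rel T.

Definition VH (B : 'I_5 -> {set T}) : {set T} := \bigcup_(j < 5) B j.

Definition nice_blowup (B : 'I_5 -> {set T}) : Prop :=
  [/\ (forall j k, j != k -> [disjoint B j & B k]),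
      (forall j, is_clique e (B j)),
      (forall j v, v \in B j ->
         (exists2 u, u \in B (ipred j) & e v u) /\
         (exists2 u, u \in B (isucc j) & e v u)),
      (forall j, anticomplete e (B j) (B (isucc (isucc j)))) &
      (forall j a b c d, a \in B j -> b \in B (isucc j) -> c \in B (isucc j) ->
         b != c -> d \in B (isucc (isucc j)) ->
         ~ induced_iso e [set a; b; c; d] (path_rel 4))].

Definition maximal_nice_blowup (B : 'I_5 -> {set T}) : Prop :=
  nice_blowup B /\
  forall B' : 'I_5 -> {set T}, nice_blowup B' -> ~ (VH B \proper VH B').

Definition supp (B : 'I_5 -> {set T}) (v : T) : {set 'I_5} :=
  [set j | [exists u in B j, e v u]].

Definition A3 (B : 'I_5 -> {set T}) (i : 'I_5) : {set T} :=
  [set v | (v \notin VH B) && (supp B v == [set ipred i; i; isucc i])].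
End Blowup.

(* Main.v *)
Require Import Defs.
From mathcomp Require Import all_boot.
Set Implicit Arguments. Unset Strict Implicit. Unset Printing Implicit Defensive.

Ltac ord_cases i := case: i => [[|[|[|[|[|[|[|?]]]]]]] ?] //.

Ltac edge_tac e_sym e_irr :=
  first [ done | by rewrite e_sym | by rewrite e_irr
        | apply/negbTE; first [done | by rewrite e_sym] ].

Lemma C4_contra (T : finType) (e : rel T) (e_sym : symmetric e) (e_irr : irreflexive e)
  (noC4 : ~ has_induced e (cycle_rel 4)) v0 v1 v2 v3 :
  e v0 v1 -> e v1 v2 -> e v2 v3 -> e v3 v0 ->
  ~~ e v0 v2 -> ~~ e v1 v3 -> v0 != v2 -> v1 != v3 -> False.
Proof.
move=> h01 h12 h23 h30 n02 n13 d02 d13; apply: noC4.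
pose f := fun k : 'I_4 => nth v0 [:: v0; v1; v2; v3] k.
have Hf : forall i j, e (f i) (f j) = cycle_rel 4 i j.
  move=> i j; ord_cases i; ord_cases j; rewrite /f /cycle_rel /=; edge_tac e_sym e_irr.
exists f; split=> // i j Eij.
have H k : cycle_rel 4 k i = cycle_rel 4 k j by rewrite -!Hf Eij.
have H0 : cycle_rel 4 i j = false by rewrite -Hf Eij e_irr.
move: (H (@Ordinal 4 0 isT)) (H (@Ordinal 4 1 isT)) (H (@Ordinal 4 2 isT))
  (H (@Ordinal 4 3 isT)) H0 Eij; clear H.
ord_cases i; ord_cases j; rewrite /cycle_rel /f /= => *; try (apply/val_inj; done);
  match goal with E : _ = _ |- _ => by rewrite E eqxx in d02 d13 end.
Qed.

Lemma C6_contra (T : finType) (e : rel T) (e_sym : symmetric e) (e_irr : irreflexive e)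
  (noC6 : ~ has_induced e (cycle_rel 6)) v0 v1 v2 v3 v4 v5 :
  e v0 v1 -> e v1 v2 -> e v2 v3 -> e v3 v4 -> e v4 v5 -> e v5 v0 ->
  ~~ e v0 v2 -> ~~ e v0 v3 -> ~~ e v0 v4 -> ~~ e v1 v3 -> ~~ e v1 v4 -> ~~ e v1 v5 ->
  ~~ e v2 v4 -> ~~ e v2 v5 -> ~~ e v3 v5 -> False.
Proof.
move=> *; apply: noC6.
pose f := fun k : 'I_6 => nth v0 [:: v0; v1; v2; v3; v4; v5] k.
have Hf : forall i j, e (f i) (f j) = cycle_rel 6 i j.
  move=> i j; ord_cases i; ord_cases j; rewrite /f /cycle_rel /=; edge_tac e_sym e_irr.
exists f; split=> // i j Eij.
have H k : cycle_rel 6 k i = cycle_rel 6 k j by rewrite -!Hf Eij.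
have H0 : cycle_rel 6 i j = false by rewrite -Hf Eij e_irr.
move: (H (@Ordinal 6 0 isT)) (H (@Ordinal 6 1 isT)) (H (@Ordinal 6 2 isT))
  (H (@Ordinal 6 3 isT)) (H (@Ordinal 6 4 isT)) (H (@Ordinal 6 5 isT)) H0; clear H Eij.
by ord_cases i; ord_cases j; rewrite /cycle_rel /= => *; apply/val_inj.
Qed.

Lemma C7_contra (T : finType) (e : rel T) (e_sym : symmetric e) (e_irr : irreflexive e)
  (noC7 : ~ has_induced e (cycle_rel 7)) v0 v1 v2 v3 v4 v5 v6 :
  e v0 v1 -> e v1 v2 -> e v2 v3 -> e v3 v4 -> e v4 v5 -> e v5 v6 -> e v6 v0 ->
  ~~ e v0 v2 -> ~~ e v0 v3 -> ~~ e v0 v4 -> ~~ e v0 v5 ->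
  ~~ e v1 v3 -> ~~ e v1 v4 -> ~~ e v1 v5 -> ~~ e v1 v6 ->
  ~~ e v2 v4 -> ~~ e v2 v5 -> ~~ e v2 v6 -> ~~ e v3 v5 -> ~~ e v3 v6 -> ~~ e v4 v6 -> False.
Proof.
move=> *; apply: noC7.
pose f := fun k : 'I_7 => nth v0 [:: v0; v1; v2; v3; v4; v5; v6] k.
have Hf : forall i j, e (f i) (f j) = cycle_rel 7 i j.
  move=> i j; ord_cases i; ord_cases j; rewrite /f /cycle_rel /=; edge_tac e_sym e_irr.
exists f; split=> // i j Eij.
have H k : cycle_rel 7 k i = cycle_rel 7 k j by rewrite -!Hf Eij.
have H0 : cycle_rel 7 i j = false by rewrite -Hf Eij e_irr.
move: (H (@Ordinal 7 0 isT)) (H (@Ordinal 7 1 isT)) (H (@Ordinal 7 2 isT))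
  (H (@Ordinal 7 3 isT)) (H (@Ordinal 7 4 isT)) (H (@Ordinal 7 5 isT))
  (H (@Ordinal 7 6 isT)) H0; clear H Eij.
by ord_cases i; ord_cases j; rewrite /cycle_rel /= => *; apply/val_inj.
Qed.
Lemma p4_check (ka kb kc kd : 'I_4) :
  ka != kb -> ka != kc -> ka != kd -> kb != kc -> kb != kd -> kc != kd ->
  path_rel 4 kb kc -> ~~ path_rel 4 ka kd ->
  (path_rel 4 ka kb && ~~ path_rel 4 ka kc && path_rel 4 kc kd && ~~ path_rel 4 kb kd) ||
  (path_rel 4 ka kc && ~~ path_rel 4 ka kb && path_rel 4 kb kd && ~~ path_rel 4 kc kd).
Proof.
by ord_cases ka; ord_cases kb; ord_cases kc; ord_cases kd.
Qed.

Lemma P4_pat (T : finType) (e : rel T) a b c d :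
  induced_iso e [set a; b; c; d] (path_rel 4) ->
  a != b -> a != c -> a != d -> b != c -> b != d -> c != d ->
  e b c -> ~~ e a d ->
  (e a b && ~~ e a c && e c d && ~~ e b d) || (e a c && ~~ e a b && e b d && ~~ e c d).
Proof.
case=> f [finj Himg Hf].
have mem z : z \in [set a; b; c; d] -> exists k, z = f k.
  by rewrite -Himg => /imsetP [k _ ->]; exists k.
have [ka ->] : exists k, a = f k by apply: mem; rewrite !inE eqxx.
have [kb ->] : exists k, b = f k by apply: mem; rewrite !inE eqxx !orbT.
have [kc ->] : exists k, c = f k by apply: mem; rewrite !inE eqxx !orbT.
have [kd ->] : exists k, d = f k by apply: mem; rewrite !inE eqxx !orbT.
rewrite !Hf => *; apply: p4_check => //; apply/eqP => E; subst;
  by match goal with H : is_true (f _ != f _) |- _ => rewrite eqxx in H end.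
Qed.

Ltac i5 j := case: j => [[|[|[|[|[|?]]]]] ?] //.

Lemma ipred_succ (j : 'I_5) : ipred (isucc j) = j.
Proof. by apply/val_inj; i5 j. Qed.
Lemma isucc_pred (j : 'I_5) : isucc (ipred j) = j.
Proof. by apply/val_inj; i5 j. Qed.
Lemma isucc3 (j : 'I_5) : isucc (isucc (isucc j)) = ipred (ipred j).
Proof. by apply/val_inj; i5 j. Qed.
Lemma ipred3 (j : 'I_5) : ipred (ipred (ipred j)) = isucc (isucc j).
Proof. by apply/val_inj; i5 j. Qed.
Lemma idx_neq (j : 'I_5) :
  [/\ [/\ j != isucc j, j != isucc (isucc j), j != ipred (ipred j) & j != ipred j],
      [/\ isucc j != isucc (isucc j), isucc j != ipred (ipred j), isucc j != ipred j &
       isucc (isucc j) != ipred (ipred j)] &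
      [/\ isucc (isucc j) != ipred j & ipred (ipred j) != ipred j]].
Proof. by i5 j. Qed.
Lemma ss_notin (j : 'I_5) :
  (isucc (isucc j) == ipred j) || (isucc (isucc j) == j) || (isucc (isucc j) == isucc j) = false.
Proof. by i5 j. Qed.
Lemma pp_notin (j : 'I_5) :
  (ipred (ipred j) == ipred j) || (ipred (ipred j) == j) || (ipred (ipred j) == isucc j) = false.
Proof. by i5 j. Qed.

Ltac idx := repeat match goal with H : isucc _ = _ |- _ => rewrite H end; by rewrite eqxx ?orbT.
Ltac esym := match goal with Hsym : symmetric _ |- _ => rewrite Hsym end.
Ltac nonadjB nA := match goal with |- is_true (~~ ?e ?u ?v) =>
  match goal with Hu : is_true (u \in ?B ?j) |- _ =>
  match goal with Hv : is_true (v \in B ?k) |- _ =>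
    apply: (nA _ _ _ _ Hu Hv); idx end end end.
Ltac xn xNss xNpp := match goal with
  | |- is_true (~~ ?e ?x ?u) => match goal with Hu : is_true (u \in _) |- _ =>
       first [ exact: (xNss _ Hu) | exact: (xNpp _ Hu) ] end
  | |- is_true (~~ ?e ?u ?x) => match goal with Hu : is_true (u \in _) |- _ =>
       esym; first [ exact: (xNss _ Hu) | exact: (xNpp _ Hu) ] end end.
Ltac ne nA xNss xNpp := first [ done | by esym | nonadjB nA | xn xNss xNpp ].
Ltac dneq := let E := fresh "E" in apply/eqP; intro E; (subst || rewrite E in * ); match goal with
  | H1 : is_true (?e ?a ?b), H2 : is_true (~~ ?e ?a ?b) |- _ => by rewrite H1 in H2
  | H1 : is_true (?e ?a ?b), H2 : is_true (~~ ?e ?b ?a) |- _ => by move: H2; esym; rewrite H1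
  | H : is_true (?e ?a ?a), Hirr : irreflexive ?e |- _ => by rewrite Hirr in H
  end.
Ltac dblk dB xB := match goal with |- is_true (?u != ?v) =>
  first [
  match goal with Hu : is_true (u \in ?B ?j) |- _ =>
  match goal with Hv : is_true (v \in B ?k) |- _ =>
    apply: (dB _ _ _ _ Hu Hv); first [done | by rewrite eq_sym] end end
  | match goal with Hu : is_true (u \in _) |- _ => exact: (xB _ _ Hu) end
  | match goal with Hv : is_true (v \in _) |- _ => rewrite eq_sym; exact: (xB _ _ Hv) end ] end.

Lemma M (T : finType) (e : rel T) (e_sym : symmetric e) (e_irr : irreflexive e)
  (noC4 : ~ has_induced e (cycle_rel 4)) (noC6 : ~ has_induced e (cycle_rel 6))
  (noC7 : ~ has_induced e (cycle_rel 7))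
  (B : 'I_5 -> {set T}) (Hmax : maximal_nice_blowup e B)
  (q : 'I_5 -> T) (qB : forall j, q j \in B j)
  (qC : forall j, complete e [set q j] (B (ipred j) :|: B (isucc j)))
  (i p s pp ss : 'I_5)
  (Hs : isucc i = s) (Hss : isucc s = ss) (Hpp : isucc ss = pp) (Hp : isucc pp = p) (Hi : isucc p = i)
  (Ps : ipred s = i) (Pss : ipred ss = s) (Ppp : ipred pp = ss) (Pp : ipred p = pp) (Pi : ipred i = p)
  (n1 : i != s) (n2 : i != ss) (n3 : i != pp) (n4 : i != p) (n5 : s != ss) (n6 : s != pp)
  (n7 : s != p) (n8 : ss != pp) (n9 : ss != p) (n10 : pp != p)
  (x : T) (xV : x \notin VH B)
  (xP : exists2 u, u \in B p & e x u) (xS : exists2 u, u \in B s & e x u)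
  (xNss : forall u, u \in B ss -> ~~ e x u) (xNpp : forall u, u \in B pp -> ~~ e x u)
  (Hanti : anticomplete e (B i :\: nbhd e x) (nbhd_in e (B s) x)) :
  [/\ q i \in nbhd_in e (B i) x /\ q s \in B s :\: nbhd e x,
      complete e (nbhd_in e (B i) x) (nbhd_in e (B p) x) /\
      complete e (nbhd_in e (B i) x) (nbhd_in e (B s) x),
      (forall a b, a \in B i :\: nbhd e x -> b \in nbhd_in e (B i) x ->
         nbhd_in e (B p :|: B s) a \proper nbhd_in e (B p :|: B s) b) &
      (forall a b, a \in B p :\: nbhd e x -> b \in nbhd_in e (B p) x ->
         nbhd_in e (B pp :|: B i) a \subset nbhd_in e (B pp :|: B i) b) /\
      (exists2 b, b \in nbhd_in e (B p) x &
         complete e [set b] (B pp :|: B i))].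
Proof.
case: Hmax => Hnice Hmaxl.
case: (Hnice) => Hdis Hcl Hnb Hac Hp4.
have qBi := qB i; have qBs := qB s; have qBss := qB ss; have qBpp := qB pp; have qBp := qB p.
have xB : forall j u, u \in B j -> u != x.
  move=> j u hu; apply/eqP => E; move/negP: xV; apply; apply/bigcupP; exists j => //; by rewrite -E.
have dB : forall j k u v, u \in B j -> v \in B k -> j != k -> u != v.
  move=> j k u v hu hv jk; apply/eqP => E; subst v.
  by rewrite (disjointFr (Hdis _ _ jk) hu) in hv.
have cl : forall j u v, u \in B j -> v \in B j -> u != v -> e u v.
  by move=> j u v hu hv; apply: (Hcl j u v).
have nA : forall j k u v, u \in B j -> v \in B k ->
    (k == isucc (isucc j)) || (j == isucc (isucc k)) -> ~~ e u v.
  move=> j k u v hu hv /orP [/eqP E|/eqP E]; subst.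
    exact: (Hac j).
  by rewrite e_sym; apply: (Hac k).
have qa : forall j u, u \in B (ipred j) -> e (q j) u.
  move=> j u hu; apply: (qC j); first by rewrite inE.
  by rewrite inE hu.
have qa' : forall j u, u \in B (isucc j) -> e (q j) u.
  move=> j u hu; apply: (qC j); first by rewrite inE.
  by rewrite inE hu orbT.
have hA : forall a c, a \in B i -> ~~ e x a -> c \in B s -> e x c -> ~~ e a c.
  move=> a c ha hxa hc hxc; apply: Hanti; by rewrite !inE ?ha ?hc ?hxa ?hxc.
have [a0 a0B a0x] : exists2 a0, a0 \in B i & ~~ e x a0.
  case: (boolP [exists a, (a \in B i) && ~~ e x a]) => [/existsP [a /andP [? ?]]|].
    by exists a.
  rewrite negb_exists => /forallP xc'.
  have xc : forall u, u \in B i -> e x u.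
    by move=> u hu; move: (xc' u); rewrite hu /= negbK.
  exfalso.
  pose B' := fun k => if k == i then x |: B k else B k.
  have memB' : forall k u, u \in B' k -> u \in B k \/ (k = i /\ u = x).
    move=> k u; rewrite /B'; case: eqP => [->|_]; last by left.
    by rewrite !inE => /orP [/eqP ->|]; [right | left].
  have subB : forall k u, u \in B k -> u \in B' k.
    by move=> k u hu; rewrite /B'; case: eqP => _ //; rewrite inE hu orbT.
  have B'ne : forall k, k != i -> B' k = B k.
    by move=> k /negbTE ki; rewrite /B' ki.
  have B'i : B' i = x |: B i by rewrite /B' eqxx.
  have Bdis' : forall j k, j != k -> [disjoint B' j & B' k].
    move=> j k jk; rewrite -setI_eq0; apply/eqP/setP => u; rewrite inE in_set0.
    apply/negP => /andP [/memB' [hj|[Ej Eu]] /memB' [hk|[Ek Eu']]].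
    - by move: (dB _ _ _ _ hj hk jk); rewrite eqxx.
    - by move: (xB _ _ hj); rewrite Eu' eqxx.
    - by move: (xB _ _ hk); rewrite Eu eqxx.
    - by move: jk; rewrite Ej Ek eqxx.
  have dB' : forall j k u v, u \in B' j -> v \in B' k -> j != k -> u != v.
    move=> j k u v hu hv jk; apply/eqP => E; subst v.
    by rewrite (disjointFr (Bdis' _ _ jk) hu) in hv.
  have cl' : forall j, is_clique e (B' j).
    move=> j u v /memB' [hu|[Ej Eu]] /memB' [hv|[Ej' Ev]] uv.
    - exact: (cl j).
    - by rewrite Ev e_sym; apply: xc; rewrite -Ej'.
    - by rewrite Eu; apply: xc; rewrite -Ej.
    - by rewrite Eu Ev eqxx in uv.
  have ac' : forall j, anticomplete e (B' j) (B' (isucc (isucc j))).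
    move=> j u v /memB' [hu|[Ej Eu]] /memB' [hv|[Ej' Ev]].
    - exact: (Hac j u v).
    - have Ej2 : j = pp by rewrite -Pp -Pi -Ej' !ipred_succ.
      by subst j; rewrite Ev e_sym; apply: xNpp.
    - by subst j; rewrite Eu; apply: xNss; rewrite -Hss -Hs.
    - by subst j; move: n2; rewrite -Ej' Hs Hss eqxx.
  have xin : forall u, u \in x |: B i -> ~~ e u (q ss) && ~~ e u (q pp).
    move=> u; rewrite !inE => /orP [/eqP ->|hu].
      by apply/andP; split; [apply: xNss | apply: xNpp].
    by apply/andP; split; [apply: (nA _ _ _ _ hu (qB ss)) | apply: (nA _ _ _ _ hu (qB pp))]; idx.
  have HA : forall b c d, b \in B s -> c \in B s -> d \in B ss -> e x b -> e b c -> e c d ->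
      ~~ e x c -> ~~ e b d -> False.
    move=> b c d hb hc hd xb bc cd xc0 bd.
    case: xP => y hy hxy.
    apply: (@C6_contra _ _ e_sym e_irr noC6 x b c d (q pp) y) => //;
      try solve [ne nA xNss xNpp].
    - by rewrite e_sym; apply: qa; rewrite Ppp.
    - by apply: qa'; rewrite Hp.
  have HB : forall a u v d, a \in B p -> d \in B s -> u \in x |: B i -> v \in x |: B i ->
      e a u -> e u v -> e v d -> ~~ e a v -> ~~ e u d -> False.
    move=> a u v d ha hd hu hv au uv vd av ud.
    case/andP: (xin _ hu) => u1 u2; case/andP: (xin _ hv) => v1 v2.
    apply: (@C6_contra _ _ e_sym e_irr noC6 a u v d (q ss) (q pp)) => //;
      try solve [ne nA xNss xNpp].
    - by rewrite e_sym; apply: qa; rewrite Pss.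
    - by apply: qa'; rewrite Hpp.
    - by apply: qa'; rewrite Hp.
  have HC : forall a b c, a \in B pp -> b \in B p -> c \in B p -> e a b -> e b c -> e c x ->
      ~~ e a c -> ~~ e b x -> False.
    move=> a b c ha hb hc ab bc cx ac bx.
    case: xS => y hy hxy.
    apply: (@C6_contra _ _ e_sym e_irr noC6 a b c x y (q ss)) => //;
      try solve [ne nA xNss xNpp].
    - by rewrite e_sym; apply: qa; rewrite Pss.
    - by apply: qa'; rewrite Hpp.
  have nice' : nice_blowup e B'.
    split => //.
    - move=> j v /memB' [hv|[Ej Ev]].
        have [[u hu hvu] [w hw hvw]] := Hnb j v hv.
        by split; [exists u|exists w] => //; apply: subB.
      subst j v; case: xP => u hu hxu; case: xS => w hw hxw.
      by split; [exists u | exists w] => //; apply: subB; rewrite ?Pi ?Hs.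
    move=> j a b c d ha hb hc bc hd Hiso.
    have [[jn1 jn2 _ _] [jn3 _ _ _] _] := idx_neq j.
    have ebc : e b c := cl' _ b c hb hc bc.
    have ead : ~~ e a d := ac' j a d ha hd.
    have pat := P4_pat Hiso (dB' _ _ _ _ ha hb jn1) (dB' _ _ _ _ ha hc jn1)
      (dB' _ _ _ _ ha hd jn2) bc (dB' _ _ _ _ hb hd jn3) (dB' _ _ _ _ hc hd jn3) ebc ead.
    case: (eqVneq (isucc j) i) => [Ej|Ej].
      have Ej2 : j = p by rewrite -Pi -Ej ipred_succ.
      subst j.
      rewrite B'ne in ha; last by rewrite eq_sym.
      rewrite Hi B'i in hb hc.
      rewrite Hi Hs B'ne in hd; last by rewrite eq_sym.
      case/orP: pat => /andP [/andP [/andP [h1 h2] h3] h4].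
        exact: (HB a b c d).
      by apply: (HB a c b d) => //; rewrite e_sym.
    rewrite B'ne // in hb hc.
    case: (memB' _ _ ha) => [ha0 | [Ej1 Ea]].
      case: (memB' _ _ hd) => [hd0 | [Ej3 Ed]].
        exact: (Hp4 j a b c d ha0 hb hc bc hd0 Hiso).
      have Ej2 : j = pp by rewrite -Pp -Pi -Ej3 !ipred_succ.
      subst j d; rewrite Hp in hb hc.
      case/orP: pat => /andP [/andP [/andP [h1 h2] h3] h4].
        exact: (HC a b c).
      by apply: (HC a c b) => //; rewrite e_sym.
    subst j a; rewrite Hs in hb hc.
    rewrite Hs Hss B'ne in hd; last by rewrite eq_sym.
    case/orP: pat => /andP [/andP [/andP [h1 h2] h3] h4].
      exact: (HA b c d).
    by apply: (HA c b d) => //; rewrite e_sym.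
  apply: (Hmaxl B' nice'); rewrite properEneq; apply/andP; split.
    apply/eqP => E.
    have : x \in VH B' by apply/bigcupP; exists i => //; rewrite B'i setU11.
    by rewrite -E (negbTE xV).
  apply/subsetP => u /bigcupP [k _ hu]; apply/bigcupP; exists k => //; exact: subB.
have [c0 c0B c0x] := xS; have [y0 y0B y0x] := xP.
have q1 : e x (q i).
  apply/negPn/negP => h.
  have h2 : e (q i) c0 by apply: qa'; rewrite Hs.
  by move: (hA _ _ (qB i) h c0B c0x); rewrite h2.
have q2 : ~~ e x (q s).
  apply/negP => h.
  have h1 := hA _ _ a0B a0x (qB s) h.
  have h2 : e (q s) a0 by apply: qa; rewrite Ps.
  by rewrite e_sym h2 in h1.
have S2s : forall b c, b \in B i -> e x b -> c \in B s -> e x c -> e b c.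
  move=> b c hb hxb hc hxc; apply/negPn/negP => nbc.
  apply: (@C4_contra _ _ e_sym e_irr noC4 b x c (q s)) => //;
    try solve [ne nA xNss xNpp | dblk dB xB].
  - apply: (cl s) => //; dneq.
  - by apply: qa; rewrite Ps.
have S2p : forall b y, b \in B i -> e x b -> y \in B p -> e x y -> e b y.
  move=> b y hb hxb hy hxy; apply/negPn/negP => nby.
  have ab : a0 != b by dneq.
  have eab : e a0 b := cl _ _ _ a0B hb ab.
  case: (boolP (e a0 y)) => ay.
    by apply: (@C4_contra _ _ e_sym e_irr noC4 a0 y x b) => //;
      try solve [ne nA xNss xNpp | dblk dB xB].
  have [_ [a1 a1B a0a1]] := Hnb i a0 a0B; rewrite Hs in a1B.
  have xa1 : ~~ e x a1.
    by apply/negP => h; move: (hA _ _ a0B a0x a1B h); rewrite a0a1.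
  have h1 : e y (q pp) by rewrite e_sym; apply: qa'; rewrite Hp.
  have h2 : e (q pp) (q ss) by rewrite e_sym; apply: qa'; rewrite Hpp.
  have h3 : e (q ss) a1 by apply: qa; rewrite Pss.
  case: (boolP (e b a1)) => ba1.
    by apply: (@C6_contra _ _ e_sym e_irr noC6 b x y (q pp) (q ss) a1) => //;
      try solve [ne nA xNss xNpp].
  by apply: (@C7_contra _ _ e_sym e_irr noC7 a0 b x y (q pp) (q ss) a1) => //;
    try solve [ne nA xNss xNpp].
have S3 : forall a b, a \in B i -> ~~ e x a -> b \in B i -> e x b ->
    forall z, (z \in B p) || (z \in B s) -> e a z -> e b z.
  move=> a b ha hxa hb hxb z /orP [zp|zs] az.
    case: (boolP (e x z)) => xz; first exact: S2p.
    apply/negPn/negP => nbz.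
    have ab : a != b by dneq.
    have eab : e a b := cl _ _ _ ha hb ab.
    have bc := S2s _ _ hb hxb c0B c0x.
    have ac := hA _ _ ha hxa c0B c0x.
    have h1 : e c0 (q ss) by rewrite e_sym; apply: qa; rewrite Pss.
    have h2 : e (q ss) (q pp) by apply: qa'; rewrite Hpp.
    have h3 : e (q pp) z by apply: qa'; rewrite Hp.
    by apply: (@C6_contra _ _ e_sym e_irr noC6 z a b c0 (q ss) (q pp)) => //;
      try solve [ne nA xNss xNpp].
  have xz : ~~ e x z by apply/negP => h; move: (hA _ _ ha hxa zs h); rewrite az.
  apply/negPn/negP => nbz.
  have ab : a != b by dneq.
  have eab : e a b := cl _ _ _ ha hb ab.
  have bc := S2s _ _ hb hxb c0B c0x.
  have ac := hA _ _ ha hxa c0B c0x.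
  have zc : z != c0 by dneq.
  have ezc := cl _ _ _ zs c0B zc.
  by apply: (@C4_contra _ _ e_sym e_irr noC4 a z c0 b) => //;
    try solve [ne nA xNss xNpp | dblk dB xB].
have S4 : forall a b, a \in B p -> ~~ e x a -> b \in B p -> e x b ->
    forall z, (z \in B pp) || (z \in B i) -> e a z -> e b z.
  move=> a b ha hxa hb hxb z /orP [zpp|zi] az.
    apply/negPn/negP => nbz.
    have ab : a != b by dneq.
    have eab : e a b := cl _ _ _ ha hb ab.
    have h1 : e c0 (q ss) by rewrite e_sym; apply: qa; rewrite Pss.
    have h2 : e (q ss) z by apply: qa'; rewrite Hpp.
    by apply: (@C6_contra _ _ e_sym e_irr noC6 z a b x c0 (q ss)) => //;
      try solve [ne nA xNss xNpp].
  case: (boolP (e x z)) => xz.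
    by rewrite e_sym; apply: S2p.
  apply/negPn/negP => nbz.
  have ab : a != b by dneq.
  have eab : e a b := cl _ _ _ ha hb ab.
  have [_ [z1 z1B zz1]] := Hnb i z zi; rewrite Hs in z1B.
  have xz1 : ~~ e x z1.
    by apply/negP => h; move: (hA _ _ zi xz z1B h); rewrite zz1.
  have zc := hA _ _ zi xz c0B c0x.
  have cz1 : c0 != z1 by dneq.
  have ecz1 := cl _ _ _ c0B z1B cz1.
  by apply: (@C6_contra _ _ e_sym e_irr noC6 z1 z a b x c0) => //;
    try solve [ne nA xNss xNpp].
have qCp := qC p; rewrite Pp Hi in qCp.
split.
- by split; rewrite !inE ?qB ?q1 ?q2.
- by split=> u v; rewrite !inE => /andP [hu hxu] /andP [hv hxv];
    [apply: S2p | apply: S2s].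
- move=> a b; rewrite !inE => /andP [hxa ha] /andP [hb hxb].
  apply/properP; split.
    apply/subsetP => z; rewrite !inE => /andP [hz az].
    by rewrite hz (S3 a b ha hxa hb hxb z hz az).
  exists c0.
    by rewrite !inE c0B orbT (S2s _ _ hb hxb c0B c0x).
  by rewrite !inE (negbTE (hA _ _ ha hxa c0B c0x)) andbF.
split.
  move=> a b; rewrite !inE => /andP [hxa ha] /andP [hb hxb].
  apply/subsetP => z; rewrite !inE => /andP [hz az].
  by rewrite hz (S4 a b ha hxa hb hxb z hz az).
case: (boolP (e x (q p))) => hq.
  exists (q p); first by rewrite !inE qB hq.
  by move=> u v; rewrite inE => /eqP ->; apply: qCp; rewrite inE.
exists y0; first by rewrite !inE y0B y0x.
move=> u v; rewrite inE => /eqP -> hv.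
have hqv : e (q p) v := qCp (q p) v (set11 _) hv.
by apply: (S4 (q p) y0 (qB p) hq y0B y0x v) => //; rewrite -in_setU.
Qed.

Theorem lemma8p1 (T : finType) (e : rel T)
  (e_sym : symmetric e) (e_irr : irreflexive e)
  (noP7 : ~ has_induced e (path_rel 7))
  (noC4 : ~ has_induced e (cycle_rel 4))
  (noC6 : ~ has_induced e (cycle_rel 6))
  (noC7 : ~ has_induced e (cycle_rel 7))
  (B : 'I_5 -> {set T}) (Hmax : maximal_nice_blowup e B)
  (q : 'I_5 -> T)
  (qB : forall j, q j \in B j)
  (qC : forall j, complete e [set q j] (B (ipred j) :|: B (isucc j)))
  (i : 'I_5) (x : T) (xA : x \in A3 e B i)
  (Hanti : anticomplete e (B i :\: nbhd e x) (nbhd_in e (B (isucc i)) x)) :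
  [/\ q i \in nbhd_in e (B i) x /\ q (isucc i) \in B (isucc i) :\: nbhd e x,
      complete e (nbhd_in e (B i) x) (nbhd_in e (B (ipred i)) x) /\
      complete e (nbhd_in e (B i) x) (nbhd_in e (B (isucc i)) x),
      (forall a b, a \in B i :\: nbhd e x -> b \in nbhd_in e (B i) x ->
         nbhd_in e (B (ipred i) :|: B (isucc i)) a \proper
         nbhd_in e (B (ipred i) :|: B (isucc i)) b) &
      (forall a b, a \in B (ipred i) :\: nbhd e x -> b \in nbhd_in e (B (ipred i)) x ->
         nbhd_in e (B (ipred (ipred i)) :|: B i) a \subset
         nbhd_in e (B (ipred (ipred i)) :|: B i) b) /\
      (exists2 b, b \in nbhd_in e (B (ipred i)) x &
         complete e [set b] (B (ipred (ipred i)) :|: B i))].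
Proof.
move: xA; rewrite inE => /andP [xV /eqP Hsupp].
have [[n1 n2 n3 n4] [n5 n6 n7 n8] [n9 n10]] := idx_neq i.
have inS : forall j, j \in [set ipred i; i; isucc i] -> exists2 u, u \in B j & e x u.
  move=> j; rewrite -Hsupp inE => /existsP [u /andP [hu hxu]]; by exists u.
have notS : forall j u, u \in B j -> e x u -> j \in [set ipred i; i; isucc i].
  move=> j u hu hxu; rewrite -Hsupp inE; apply/existsP; exists u; by rewrite hu.
apply: (M e_sym e_irr noC4 noC6 noC7 Hmax qB qC (s := isucc i) (ss := isucc (isucc i))) => //;
  try solve [exact: isucc3 | exact: isucc_pred | exact: ipred_succ | exact: ipred3 | by rewrite eq_sym].
- apply: inS; by rewrite !inE eqxx.
- apply: inS; by rewrite !inE eqxx ?orbT.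
- move=> u hu; apply/negP => h; move: (notS _ _ hu h).
  by rewrite !inE ss_notin.
- move=> u hu; apply/negP => h; move: (notS _ _ hu h).
  by rewrite !inE pp_notin.
Qed.
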